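(* Let $K$ be an algebraically closed field, $\mathcal{T}$ a $\operatorname{Hom}$-finite Krull–Schmidt triangulated $K$-category with a Serre functor $\mathbb{S}$, and $\mathcal{I}$ a functorially finite ideal of $\mathcal{T}$. Then $\mathcal{I}$ is $\tau$-stable if and only if $\mathrm{Gh}_{\mathcal{I}}=\mathrm{CoGh}_{\mathcal{I}[1]}$.
   Context: A Serre functor is a $K$-linear autoequivalence $\mathbb{S}$ with natural isomorphisms $\operatorname{Hom}(A,B)\cong D\operatorname{Hom}(B,\mathbb{S}A)$, $D=\operatorname{Hom}_K(-,K)$; $\tau=\mathbb{S}[-1]$. An ideal: subgroups $\mathcal{I}(X,Y)\subseteq\operatorname{Hom}(X,Y)$ closed under composition; it is functorially finite if each object has a left and a right $\mathcal{I}$-approximation (a morphism of $\mathcal{I}$ starting/ending at the object through which all such morphisms of $\mathcal{I}$ factor). $\mathcal{I}$ is $\tau$-stable if $\tau\mathcal{I}=\mathcal{I}$, where $\tau\mathcal{I}=\{\tau(f):f\in\mathcal{I}\}$. $\mathcal{I}[1]=\{f[1]:f\in\mathcal{I}\}$. With composition $gf$ meaning $f$ first: $\mathrm{Gh}_{\mathcal{I}}=\{f: fi=0\ \forall\text{ composable } i\in\mathcal{I}\}$, $\mathrm{CoGh}_{\mathcal{I}}=\{f: if=0\ \forall\text{ composable } i\in\mathcal{I}\}$. *)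

(* Defs.v *)
From HB Require Import structures.
From mathcomp Require Import all_boot all_order all_algebra.
Set Implicit Arguments. Unset Strict Implicit. Unset Printing Implicit Defensive.
Import GRing.Theory.
Local Open Scope ring_scope.

(* K-linear categories.  Hom-spaces are finite-dimensional K-vector spaces    *)
(* (vectType K), so every such category is Hom-finite.                        *)
Record KCat (K : fieldType) := KCatMk {
  Ob : Type;
  Hom : Ob -> Ob -> vectType K;
  comp : forall X Y Z : Ob, Hom Y Z -> Hom X Y -> Hom X Z;
  idm : forall X : Ob, Hom X X;
  compA : forall X Y Z W (h : Hom Z W) (g : Hom Y Z) (f : Hom X Y),
      comp h (comp g f) = comp (comp h g) f;
  comp1m : forall X Y (f : Hom X Y), comp (idm Y) f = f;
  compm1 : forall X Y (f : Hom X Y), comp f (idm X) = f;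
  comp_linr : forall X Y Z (g : Hom Y Z) (a : K) (f1 f2 : Hom X Y),
      comp g (a *: f1 + f2) = a *: comp g f1 + comp g f2;
  comp_linl : forall X Y Z (f : Hom X Y) (a : K) (g1 g2 : Hom Y Z),
      comp (a *: g1 + g2) f = a *: comp g1 f + comp g2 f
}.
Arguments Hom {K} C X Y : rename.
Arguments comp {K C X Y Z} g f : rename.
Arguments idm {K C} X : rename.

Section KCatTheory.
Variables (K : fieldType) (C : KCat K).
Local Notation Ob := (Ob C).
Local Notation Hom := (Hom C).

Definition is_iso (X Y : Ob) (f : Hom X Y) : Prop :=
  exists g : Hom Y X, comp g f = idm X /\ comp f g = idm Y.

Definition isomorphic (X Y : Ob) : Prop := exists f : Hom X Y, is_iso f.

(* iota and projections pi.  For n = 0 this says S is a zero object.         *)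
Definition is_biprod (n : nat) (Xs : 'I_n -> Ob) (S : Ob)
    (iota : forall k, Hom (Xs k) S) (pi : forall k, Hom S (Xs k)) : Prop :=
  (forall k, comp (pi k) (iota k) = idm (Xs k)) /\
  (forall k l, k != l -> comp (pi l) (iota k) = 0) /\
  (\sum_(k < n) comp (iota k) (pi k) = idm S).

(* Z is a zero object (End Z = 0, equivalently Hom(Z,-) = 0 = Hom(-,Z)). *)
Definition is_zero_obj (Z : Ob) : Prop := idm Z = 0.

Definition additive_cat : Prop :=
  forall (n : nat) (Xs : 'I_n -> Ob), exists S iota pi, @is_biprod n Xs S iota pi.

Definition local_obj (X : Ob) : Prop :=
  idm X <> 0 /\ forall f : Hom X X, is_iso f \/ is_iso (idm X - f).

Definition krull_schmidt : Prop :=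
  forall X : Ob, exists (n : nat) (Xs : 'I_n -> Ob) (S : Ob) iota pi,
    @is_biprod n Xs S iota pi /\ isomorphic S X /\ (forall k, local_obj (Xs k)).

Record kfunctor := KFunctor {
  fobj :> Ob -> Ob;
  fmap : forall X Y, Hom X Y -> Hom (fobj X) (fobj Y);
  fmap_id : forall X, fmap (idm X) = idm (fobj X);
  fmap_comp : forall X Y Z (g : Hom Y Z) (f : Hom X Y),
      fmap (comp g f) = comp (fmap g) (fmap f);
  fmap_lin : forall X Y (a : K) (f1 f2 : Hom X Y),
      fmap (a *: f1 + f2) = a *: fmap f1 + fmap f2
}.

Definition id_functor : kfunctor.
Proof.
refine (@KFunctor (fun X => X) (fun X Y f => f) _ _ _); by [].
Defined.

Definition comp_functor (F G : kfunctor) : kfunctor.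
Proof.
refine (@KFunctor (fun X => F (G X)) (fun X Y f => fmap F (fmap G f)) _ _ _).
- by move=> X; rewrite !fmap_id.
- by move=> X Y Z g f; rewrite !fmap_comp.
- by move=> X Y a f1 f2; rewrite !fmap_lin.
Defined.

Definition nat_iso (F G : kfunctor) : Prop :=
  exists alpha : forall X, Hom (F X) (G X),
    (forall X, is_iso (alpha X)) /\
    (forall X Y (f : Hom X Y), comp (fmap G f) (alpha X) = comp (alpha Y) (fmap F f)).

Definition fully_faithful (F : kfunctor) : Prop :=
  forall X Y, bijective (@fmap F X Y).

Definition dense (F : kfunctor) : Prop :=
  forall Y : Ob, exists X : Ob, isomorphic (F X) Y.

Definition autoequivalence (F : kfunctor) : Prop :=
  fully_faithful F /\ dense F.

Record triangle (Sh : kfunctor) := Tri {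
  tX : Ob; tY : Ob; tZ : Ob;
  tu : Hom tX tY; tv : Hom tY tZ; tw : Hom tZ (Sh tX)
}.

Definition tri_iso (Sh : kfunctor) (T T' : triangle Sh) : Prop :=
  exists (a : Hom (tX T) (tX T')) (b : Hom (tY T) (tY T')) (c : Hom (tZ T) (tZ T')),
    [/\ is_iso a, is_iso b, is_iso c &
        [/\ comp b (tu T) = comp (tu T') a,
             comp c (tv T) = comp (tv T') b &
             comp (fmap Sh a) (tw T) = comp (tw T') c]].

Record triangulated := Triangulated {
  shift : kfunctor;
  unshift : kfunctor;
  shift_unshift : nat_iso (comp_functor shift unshift) id_functor;
  unshift_shift : nat_iso (comp_functor unshift shift) id_functor;
  dist : triangle shift -> Prop;
  TR1_iso : forall T T', tri_iso T T' -> dist T -> dist T';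
  TR1_id : forall X : Ob, exists (Z : Ob) (v : Hom X Z) (w : Hom Z (shift X)),
      is_zero_obj Z /\
      dist (@Tri shift X X Z (idm X) v w);
  TR1_ext : forall X Y (u : Hom X Y), exists Z (v : Hom Y Z) (w : Hom Z (shift X)),
      dist (Tri u v w);
  TR2 : forall X Y Z (u : Hom X Y) (v : Hom Y Z) (w : Hom Z (shift X)),
      dist (Tri u v w) <-> dist (Tri v w (- fmap shift u));
  TR3 : forall T T' (a : Hom (tX T) (tX T')) (b : Hom (tY T) (tY T')),
      dist T -> dist T' -> comp b (tu T) = comp (tu T') a ->
      exists c : Hom (tZ T) (tZ T'),
        comp c (tv T) = comp (tv T') b /\ comp (fmap shift a) (tw T) = comp (tw T') c;
  TR4 : forall X Y Z Z' X' Y' (u : Hom X Y) (v : Hom Y Z)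
      (j : Hom Y Z') (k : Hom Z' (shift X))
      (l : Hom Z X') (i : Hom X' (shift Y))
      (m : Hom Z Y') (n : Hom Y' (shift X)),
      dist (Tri u j k) -> dist (Tri v l i) -> dist (Tri (comp v u) m n) ->
      exists (f : Hom Z' Y') (g : Hom Y' X'),
        [/\ dist (Tri f g (comp (fmap shift j) i)),
            comp m v = comp f j, k = comp n f, comp g m = l &
            comp i g = comp (fmap shift u) n]
}.

Definition serre_functor (S : kfunctor) : Prop :=
  autoequivalence S /\
  exists eta : forall A B : Ob, 'Hom(Hom A B, 'Hom(Hom B (S A), K^o)),
    (forall A B, bijective (eta A B)) /\
    (forall A A' B B' (a : Hom A' A) (b : Hom B B') (f : Hom A B) (g : Hom B' (S A')),
        eta A' B' (comp b (comp f a)) g = eta A B f (comp (fmap S a) (comp g b))).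

Definition ideal_of := forall X Y : Ob, Hom X Y -> Prop.

Definition is_ideal (I : ideal_of) : Prop :=
  (forall X Y, I X Y 0) /\
  (forall X Y (f g : Hom X Y), I X Y f -> I X Y g -> I X Y (f - g)) /\
  (forall X Y Z W (a : Hom Y Z) (f : Hom X Y) (b : Hom W X),
      I X Y f -> I W Z (comp a (comp f b))).

Definition right_approx (I : ideal_of) (X : Ob) : Prop :=
  exists (Y : Ob) (r : Hom Y X), I Y X r /\
    forall Z (i : Hom Z X), I Z X i -> exists h : Hom Z Y, i = comp r h.

Definition left_approx (I : ideal_of) (X : Ob) : Prop :=
  exists (Y : Ob) (l : Hom X Y), I X Y l /\
    forall Z (i : Hom X Z), I X Z i -> exists h : Hom Y Z, i = comp h l.

Definition functorially_finite (I : ideal_of) : Prop :=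
  forall X : Ob, left_approx I X /\ right_approx I X.

(* F I := the ideal {F f : f in I}, i.e. the ideal generated by the
   morphisms F f, f in I (closing under composition on both sides; sums are
   then automatic in an additive category). *)
Definition image_ideal (F : kfunctor) (I : ideal_of) : ideal_of :=
  fun X Y g => exists (X' Y' : Ob) (f : Hom X' Y') (a : Hom (F Y') Y) (b : Hom X (F X')),
    I X' Y' f /\ g = comp a (comp (fmap F f) b).

Definition Gh (I : ideal_of) : ideal_of :=
  fun Y Z f => forall X (i : Hom X Y), I X Y i -> comp f i = 0.

Definition CoGh (I : ideal_of) : ideal_of :=
  fun X Y f => forall Z (i : Hom Y Z), I Y Z i -> comp i f = 0.

Definition same_ideal (I J : ideal_of) : Prop :=
  forall X Y (f : Hom X Y), I X Y f <-> J X Y f.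

End KCatTheory.

Definition tau_functor (K : fieldType) (C : KCat K) (T : triangulated C)
    (S : kfunctor C) : kfunctor C :=
  comp_functor S (unshift T).

Definition tau_stable (K : fieldType) (C : KCat K) (T : triangulated C)
    (S : kfunctor C) (I : ideal_of C) : Prop :=
  same_ideal (image_ideal (tau_functor T S) I) I.

Definition shift_ideal (K : fieldType) (C : KCat K) (T : triangulated C)
    (I : ideal_of C) : ideal_of C :=
  image_ideal (shift T) I.

(* Main.v *)
Require Import Defs.
From mathcomp Require Import all_boot all_order all_algebra.
Set Implicit Arguments. Unset Strict Implicit. Unset Printing Implicit Defensive.
Import GRing.Theory.
Local Open Scope ring_scope.

Section Basics.
Variables (K : fieldType) (C : KCat K).
Local Notation Ob := (Ob C).
Local Notation Hom := (Defs.Hom C).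
Local Notation cmp := Defs.comp.

Lemma xxx_eq0 (V : zmodType) (x : V) : x = x + x -> x = 0.
Proof. by move=> h; apply: (@addrI _ x); rewrite addr0 -h. Qed.

Lemma comp0m (X Y Z : Ob) (f : Hom X Y) : cmp (0 : Hom Y Z) f = 0.
Proof.
apply: xxx_eq0; have := comp_linl f 1 (0 : Hom Y Z) 0.
by rewrite !scale1r addr0.
Qed.

Lemma compm0 (X Y Z : Ob) (g : Hom Y Z) : cmp g (0 : Hom X Y) = 0.
Proof.
apply: xxx_eq0; have := comp_linr g 1 (0 : Hom X Y) 0.
by rewrite !scale1r addr0.
Qed.

Lemma compmB (X Y Z : Ob) (g : Hom Y Z) (f1 f2 : Hom X Y) :
  cmp g (f1 - f2) = cmp g f1 - cmp g f2.
Proof.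
have := comp_linr g (-1) f2 f1; rewrite !scaleN1r => h.
by rewrite addrC h addrC.
Qed.

Lemma compmN (X Y Z : Ob) (g : Hom Y Z) (f : Hom X Y) :
  cmp g (- f) = - cmp g f.
Proof. by rewrite -sub0r compmB compm0 sub0r. Qed.

Lemma compBm (X Y Z : Ob) (f : Hom X Y) (g1 g2 : Hom Y Z) :
  cmp (g1 - g2) f = cmp g1 f - cmp g2 f.
Proof.
have := comp_linl f (-1) g2 g1; rewrite !scaleN1r => h.
by rewrite addrC h addrC.
Qed.

Lemma compNm (X Y Z : Ob) (f : Hom X Y) (g : Hom Y Z) :
  cmp (- g) f = - cmp g f.
Proof. by rewrite -sub0r compBm comp0m sub0r. Qed.

Lemma fmap0 (F : kfunctor C) (X Y : Ob) : fmap F (0 : Hom X Y) = 0.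
Proof.
apply: xxx_eq0; have := fmap_lin F 1 (0 : Hom X Y) 0.
by rewrite !scale1r addr0.
Qed.

Lemma fmapN (F : kfunctor C) (X Y : Ob) (f : Hom X Y) : fmap F (- f) = - fmap F f.
Proof.
have := fmap_lin F (-1) f 0; rewrite !scaleN1r !addr0 => ->.
by rewrite fmap0 addr0.
Qed.

Lemma iso_cancel_r (X Y Z : Ob) (a : Hom X Y) (f g : Hom Y Z) :
  is_iso a -> cmp f a = cmp g a -> f = g.
Proof.
move=> [b [_ ab]] h.
by rewrite -(compm1 f) -ab Defs.compA h -Defs.compA ab compm1.
Qed.

Lemma iso_cancel_l (X Y Z : Ob) (a : Hom Y Z) (f g : Hom X Y) :
  is_iso a -> cmp a f = cmp a g -> f = g.
Proof.
move=> [b [ba _]] h.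
by rewrite -(comp1m f) -ba -Defs.compA h Defs.compA ba comp1m.
Qed.

Lemma iso_cancel_r0 (X Y Z : Ob) (a : Hom X Y) (f : Hom Y Z) :
  is_iso a -> cmp f a = 0 -> f = 0.
Proof. by move=> ia h; apply: (iso_cancel_r ia); rewrite h comp0m. Qed.

Lemma iso_cancel_l0 (X Y Z : Ob) (a : Hom Y Z) (f : Hom X Y) :
  is_iso a -> cmp a f = 0 -> f = 0.
Proof. by move=> ia h; apply: (iso_cancel_l ia); rewrite h compm0. Qed.

Lemma zero_obj_out (Z0 W : Ob) (f : Hom Z0 W) : is_zero_obj Z0 -> f = 0.
Proof. by rewrite /is_zero_obj => h; rewrite -(compm1 f) h compm0. Qed.

Lemma zero_obj_in (Z0 W : Ob) (f : Hom W Z0) : is_zero_obj Z0 -> f = 0.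
Proof. by rewrite /is_zero_obj => h; rewrite -(comp1m f) h comp0m. Qed.

End Basics.
Section Main.
Variables (K : fieldType) (C : KCat K) (S : kfunctor C).
Local Notation Ob := (Ob C).
Local Notation Hom := (Defs.Hom C).
Local Notation cmp := Defs.comp.
Variable eta : forall A B : Ob, 'Hom(Hom A B, 'Hom(Hom B (S A), K^o)).
Hypothesis etabij : forall A B, bijective (eta A B).
Hypothesis etanat : forall A A' B B' (a : Hom A' A) (b : Hom B B') (f : Hom A B)
  (g : Hom B' (S A')),
  eta A' B' (cmp b (cmp f a)) g = eta A B f (cmp (fmap S a) (cmp g b)).

Lemma natR (A B B' : Ob) (b : Hom B B') (f : Hom A B) (g : Hom B' (S A)) :
  eta A B' (cmp b f) g = eta A B f (cmp g b).
Proof.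
have := etanat (idm A) b f g.
by rewrite Defs.compm1 fmap_id Defs.comp1m.
Qed.

Lemma natL (A A' B : Ob) (a : Hom A' A) (f : Hom A B) (g : Hom B (S A')) :
  eta A' B (cmp f a) g = eta A B f (cmp (fmap S a) g).
Proof.
have := etanat a (idm B) f g.
by rewrite !Defs.comp1m !Defs.compm1.
Qed.

Lemma eta0 (A B : Ob) (g : Hom B (S A)) : eta A B 0 g = 0.
Proof. by rewrite linear0 zero_lfunE. Qed.

Lemma etag0 (A B : Ob) (f : Hom A B) : eta A B f 0 = 0.
Proof. by rewrite linear0. Qed.

Lemma ND1 (A B : Ob) (f : Hom A B) : (forall g, eta A B f g = 0) -> f = 0.
Proof.
move=> h; apply: (bij_inj (etabij A B)); rewrite linear0.
by apply/lfunP => g; rewrite zero_lfunE; exact: h.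
Qed.

Lemma ND2 (A B : Ob) (g : Hom B (S A)) : (forall f, eta A B f g = 0) -> g = 0.
Proof.
move=> h; apply/eqP; apply/negPn/negP => gn0.
have [/existsP[i hi]| /existsPn hall] :=
  boolP [exists i, coord (vbasis (@fullv K (Hom B (S A)))) i g != 0].
  case: (etabij A B) => inv h1 h2.
  pose phi : 'Hom(Hom B (S A), K^o) := @linfun K _ K^o (coord (vbasis fullv) i).
  have := h (inv phi); rewrite h2 /phi lfunE /= => e.
  by rewrite e eqxx in hi.
move: gn0; rewrite (coord_vbasis (memvf g)) big1 ?eqxx //.
by move=> i _; have := hall i; rewrite negbK => /eqP ->; rewrite scale0r.
Qed.

Variable (T : triangulated C).
Local Notation sh := (shift T).
Local Notation un := (unshift T).
Variables (alpha : forall X, Hom (un (sh X)) X) (beta : forall X, Hom (sh (un X)) X).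
Hypotheses (aiso : forall X, is_iso (alpha X))
  (anat : forall X Y (f : Hom X Y), cmp f (alpha X) = cmp (alpha Y) (fmap un (fmap sh f)))
  (biso : forall X, is_iso (beta X))
  (bnat : forall X Y (f : Hom X Y), cmp f (beta X) = cmp (beta Y) (fmap sh (fmap un f))).

Lemma sh_faithful (X Y : Ob) (f g : Hom X Y) : fmap sh f = fmap sh g -> f = g.
Proof. by move=> h; apply: (iso_cancel_r (aiso X)); rewrite !anat h. Qed.

Lemma sh_faithful0 (X Y : Ob) (f : Hom X Y) : fmap sh f = 0 -> f = 0.
Proof. by rewrite -(fmap0 sh X Y) => /sh_faithful. Qed.

Lemma un_faithful (X Y : Ob) (f g : Hom X Y) : fmap un f = fmap un g -> f = g.
Proof. by move=> h; apply: (iso_cancel_r (biso X)); rewrite !bnat h. Qed.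

Lemma un_faithful0 (X Y : Ob) (f : Hom X Y) : fmap un f = 0 -> f = 0.
Proof. by rewrite -(fmap0 un X Y) => /un_faithful. Qed.

Lemma un_full (Y' Y : Ob) (a1 : Hom (un Y') (un Y)) : exists a2, fmap un a2 = a1.
Proof.
case: (biso Y') => b' [b'b bb'].
exists (cmp (beta Y) (cmp (fmap sh a1) b')).
apply: sh_faithful; apply: (iso_cancel_l (biso Y)).
rewrite -bnat -!Defs.compA b'b Defs.compm1 //.
Qed.

Lemma sh_full (W X : Ob) (c : Hom (sh W) (sh X)) : exists n, fmap sh n = c.
Proof.
case: (aiso W) => a' [a'a aa'].
exists (cmp (alpha X) (cmp (fmap un c) a')).
apply: un_faithful; apply: (iso_cancel_l (aiso X)).
rewrite -anat -!Defs.compA a'a Defs.compm1 //.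
Qed.

Lemma un_full' (Y A : Ob) (g : Hom (un Y) A) :
  exists F : Hom Y (sh A), cmp (alpha A) (fmap un F) = g.
Proof.
case: (aiso A) => a' [a'a aa'].
case: (un_full (cmp a' g)) => F hF; exists F.
by rewrite hF Defs.compA aa' Defs.comp1m.
Qed.

Lemma E1 (X Y Z : Ob) (u : Hom X Y) (v : Hom Y Z) (w : Hom Z (sh X)) :
  dist (Tri u v w) -> cmp v u = 0.
Proof.
move=> hdist.
case: (TR1_id T X) => Z0 [v0 [w0 [z0 hd]]].
have [c [hc _]] := @TR3 _ _ T (Tri (idm X) v0 w0) (Tri u v w) (idm X) u hd hdist erefl.
move: hc => /=; rewrite (zero_obj_out c z0) comp0m => <- //.
Qed.

Lemma E2 (X Y Z : Ob) (u : Hom X Y) (v : Hom Y Z) (w : Hom Z (sh X)) :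
  dist (Tri u v w) -> forall W (m : Hom W Y), cmp v m = 0 -> exists n, m = cmp u n.
Proof.
move=> hdist W m hm.
case: (TR1_id T W) => Z0 [v0 [w0 [z0 hd]]].
have hd' := (TR2 _ _ _).1 hd.
have hdist' := (TR2 _ _ _).1 hdist.
have hc0 : cmp (0 : Hom Z0 Z) v0 = cmp v m by rewrite comp0m hm.
have [c [_ h]] := @TR3 _ _ T (Tri v0 w0 (- fmap sh (idm W))) (Tri v w (- fmap sh u)) m (0 : Hom Z0 Z) hd' hdist' hc0.
move: h => /=; rewrite fmap_id compmN Defs.compm1 compNm => /oppr_inj h.
case: (sh_full c) => n hn; exists n.
by apply: sh_faithful; rewrite fmap_comp hn h.
Qed.


Hypothesis Sff : forall X Y, bijective (@fmap _ _ S X Y).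
Hypothesis Sdense : forall Y, exists X, isomorphic (S X) Y.

Lemma S_full (A B : Ob) (h : Hom (S A) (S B)) : exists x, fmap S x = h.
Proof. by case: (Sff A B) => inv _ h2; exists (inv h); exact: h2. Qed.

Lemma fmap_iso (F : kfunctor C) (A B : Ob) (a : Hom A B) : is_iso a -> is_iso (fmap F a).
Proof.
case=> b [ba ab]; exists (fmap F b).
by rewrite -!fmap_comp ba ab !fmap_id.
Qed.

Lemma iso_comp (A B D : Ob) (a : Hom A B) (b : Hom B D) :
  is_iso a -> is_iso b -> is_iso (cmp b a).
Proof.
case=> a' [a'a aa'] [b' [b'b bb']]; exists (cmp a' b'); split.
  by rewrite -Defs.compA (Defs.compA b') b'b Defs.comp1m.
by rewrite -Defs.compA (Defs.compA a) aa' Defs.comp1m.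
Qed.

Lemma DO (Y0 X0 U : Ob) (rho : Hom X0 (S Y0)) (k : Hom U (S Y0)) :
  (forall f' : Hom Y0 U,
     (forall m : Hom U X0, eta Y0 U f' (cmp rho m) = 0) -> eta Y0 U f' k = 0) ->
  exists m, k = cmp rho m.
Proof.
move=> H; case: (TR1_ext T rho) => Z [v [w hd]].
apply: (E2 hd).
have vr : cmp v rho = 0 := E1 hd.
case: (Sdense Z) => C' [e [e' [e'e ee']]].
case: (S_full (cmp e' v)) => v' hv'.
have h : cmp e' (cmp v k) = 0.
  apply: (@ND2 C') => f''.
  rewrite Defs.compA -hv' -natL; apply: H => m.
  by rewrite natL Defs.compA hv' -(Defs.compA e') vr compm0 comp0m etag0.
by rewrite -(Defs.comp1m (cmp v k)) -ee' -Defs.compA h compm0.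
Qed.

Variable I : ideal_of C.
Hypothesis Icomp : forall X Y Z W (a : Hom Y Z) (f : Hom X Y) (b : Hom W X),
  @I X Y f -> @I W Z (cmp a (cmp f b)).

Lemma Icompl X Y Z (a : Hom Y Z) (f : Hom X Y) : @I X Y f -> @I X Z (cmp a f).
Proof. by move=> h; have := Icomp a (idm X) h; rewrite Defs.compm1. Qed.

Lemma Icompr X Y W (f : Hom X Y) (b : Hom W X) : @I X Y f -> @I W Y (cmp f b).
Proof. by move=> h; have := Icomp (idm Y) b h; rewrite Defs.comp1m. Qed.

Lemma Cfwd (Y Z : Ob) (f : Hom Y Z) :
  CoGh (shift_ideal T I) f ->
  forall k : Hom (un Z) (S (un Y)), @I _ _ k -> eta (un Y) (un Z) (fmap un f) k = 0.
Proof.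
move=> hC k hk.
have -> : eta (un Y) (un Z) (fmap un f) k =
          eta (un Y) (S (un Y)) (cmp k (fmap un f)) (idm _)
  by rewrite natR Defs.comp1m.
suff -> : cmp k (fmap un f) = 0 by rewrite eta0.
apply: sh_faithful0; rewrite fmap_comp.
case: (biso Z) => bz' [bz'bz bzbz'].
have hj : cmp (cmp (fmap sh k) bz') f = 0.
  apply: hC; exists (un Z), (S (un Y)), k, (idm _), bz'; split => //.
  by rewrite Defs.comp1m.
have : cmp (cmp (cmp (fmap sh k) bz') f) (beta Y) = 0 by rewrite hj comp0m.
rewrite -Defs.compA bnat Defs.compA -(Defs.compA (fmap sh k)) bz'bz Defs.compm1.
by [].
Qed.

Lemma Cbwd (Y Z : Ob) (f : Hom Y Z) :
  (forall k : Hom (un Z) (S (un Y)), @I _ _ k -> eta (un Y) (un Z) (fmap un f) k = 0) ->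
  CoGh (shift_ideal T I) f.
Proof.
move=> H W j [X' [Y' [h [a [b [hh ->]]]]]].
rewrite -!Defs.compA.
suff -> : cmp (fmap sh h) (cmp b f) = 0 by rewrite compm0.
apply: un_faithful0; apply: (iso_cancel_l0 (aiso Y')).
rewrite !fmap_comp Defs.compA -anat -Defs.compA Defs.compA Defs.compA.
have hj' : @I _ _ (cmp (cmp h (alpha X')) (fmap un b)).
  by apply: Icompr; apply: Icompr.
apply: ND1 => g; rewrite natR; apply: H.
exact: Icompl.
Qed.

Lemma main_equiv (FF : forall X, right_approx I X) :
  tau_stable T S I <-> same_ideal (Gh I) (CoGh (shift_ideal T I)).
Proof.
split.
  move=> hT Y Z f; split.
    move=> hG; apply: Cbwd => k hk.
    have [X'' [Y'' [h' [a0 [b0 [hh' ek]]]]]] := (hT _ _ k).2 hk.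
    case: (S_full a0) => a1 ha1; case: (un_full a1) => a2 ha2.
    rewrite ek -ha1 -ha2 /= Defs.compA -!fmap_comp -natL -fmap_comp.
    by rewrite (hG _ _ (Icompl a2 hh')) fmap0 eta0.
  move=> hC X i hi; apply: un_faithful0; rewrite fmap_comp.
  apply: ND1 => g; rewrite natL; apply: (Cfwd hC).
  apply: (hT _ _ _).1; exists X, Y, i, (idm _), g; split => //.
  by rewrite Defs.comp1m.
move=> hE X Y g; split.
  case=> [X' [Y' [h [a [b [hh ->]]]]]].
  suff : @I _ _ (fmap S (fmap un h)) by move=> hS; apply: Icomp.
  case: (FF (S (un Y'))) => R [r [hr hfac]].
  have [m ->] : exists m, fmap S (fmap un h) = cmp r m.
    apply: DO => f' Hf'.
    rewrite -[fmap S (fmap un h)]Defs.compm1 -natL.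
    suff -> : cmp f' (fmap un h) = 0 by rewrite eta0.
    case: (un_full' f') => F hF.
    rewrite -hF -Defs.compA -fmap_comp.
    suff -> : cmp F h = 0 by rewrite fmap0 compm0.
    apply: ((hE _ _ F).2 _ _ h hh).
    apply: Cbwd => k hk.
    case: (aiso (S (unshift T X'))) => a' [a'a aa'].
    have : @I _ _ (cmp k a') by exact: Icompr.
    case/hfac => m0 hm0.
    have := Hf' m0; rewrite -hm0 -hF natR -Defs.compA a'a Defs.compm1.
    by [].
  exact: Icompr.
move=> hg.
case: (Sdense Y) => Y1 [e1 ie1].
pose Yh := sh Y1.
pose eY := cmp e1 (fmap S (alpha Y1)).
have ieY : is_iso eY by apply: iso_comp => //; apply: fmap_iso.
case: ieY => eY' [eY'eY eYeY'].
case: (FF Yh) => R [r [hr hfac]].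
have [m hm] : exists m, cmp eY' g = cmp (fmap S (fmap un r)) m.
  apply: DO => f' Hf'.
  have h0 : cmp f' (fmap un r) = 0.
    by apply: ND1 => m0; rewrite natL; exact: Hf'.
  case: (un_full' f') => F hF.
  have hFr : cmp F r = 0.
    apply: un_faithful0; apply: (iso_cancel_l0 (aiso X)).
    by rewrite fmap_comp Defs.compA hF.
  have hG : Gh I F.
    move=> W i hi; case: (hfac _ i hi) => h'' ->.
    by rewrite Defs.compA hFr comp0m.
  have hC := (hE _ _ F).1 hG.
  rewrite -hF natR; apply: (Cfwd hC).
  by apply: Icompr; apply: Icompl.
exists R, Yh, r, eY, m; split => //.
by rewrite -hm Defs.compA eYeY' Defs.comp1m.
Qed.

End Main.

Theorem lemma3p10 (K : closedFieldType) (C : KCat K) (T : triangulated C)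
    (S : kfunctor C) (I : ideal_of C) :
  additive_cat C -> krull_schmidt C -> serre_functor S ->
  is_ideal I -> functorially_finite I ->
  tau_stable T S I <-> same_ideal (Gh I) (CoGh (shift_ideal T I)).
Proof.
move=> _ _ [[Sff Sdense] [eta [etabij etanat]]] [_ [_ Icomp]] hFF.
case: (unshift_shift T) => alpha [aiso anat].
case: (shift_unshift T) => beta [biso bnat].
apply: (main_equiv etabij etanat (alpha := alpha) (beta := beta) aiso anat biso bnat Sff Sdense Icomp).
by move=> X; case: (hFF X).
Qed.
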